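(* Let $n\ge2$, $M$ a nonderogatory $d\times d$ matrix with minimal polynomial $\mathbf p$, and $\mathcal B$ a generic maximal subalgebra of $\mathcal T_{n,d}[\mathcal P(M)]$ with associated polynomials $\mathbf s_+,\mathbf s_-$; put $\mathbf d=\mathbf p/(\mathbf s_+\mathbf s_-)$. Let $A\in\mathcal B$ and polynomials $\tilde{\mathbf a}_j$ ($j=\pm1,\dots,\pm(n-1)$), each relatively prime to $\mathbf p$, satisfy $A_j=\mathbf s_+(M)\tilde{\mathbf a}_j(M)$ for $j\ge1$ and $A_j=\mathbf s_-(M)\tilde{\mathbf a}_j(M)$ for $j\le-1$. For each $i=1,\dots,n-1$ choose $\boldsymbol\gamma_i\in\mathbb C[X]$ such that $\mathbf p$ divides $\boldsymbol\gamma_i\tilde{\mathbf a}_{i-n}-1$, and set $\boldsymbol\xi_i=\tilde{\mathbf a}_i\boldsymbol\gamma_i$. Then $\mathbf d$ divides $\boldsymbol\xi_i-\boldsymbol\xi_j$ for all $i,j\in\{1,\dots,n-1\}$.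
   Context: A nonderogatory matrix is one whose minimal polynomial equals its characteristic polynomial; $\mathcal P(M)$ is the algebra of polynomials in $M$; $\mathcal T_{n,d}[\mathcal P(M)]$ is the set of $n\times n$ block Toeplitz matrices $(B_{i-j})_{i,j=0}^{n-1}$ with all $B_m\in\mathcal P(M)$. A maximal subalgebra of $\mathcal T_{n,d}[\mathcal P(M)]$ is a subalgebra contained in it, maximal under inclusion. It is generic if it is contained neither in the set of such matrices with $B_i=0$ for all $i\ge1$ nor in the set with $B_i=0$ for all $i\le-1$. For $B\in\mathcal B$ write $B_j=\mathbf b_j(M)$; $\mathbf s_+$ is the greatest common divisor of $\mathbf p$ and all $\mathbf b_j$ with $j\ge1$, $B\in\mathcal B$, and $\mathbf s_-$ the greatest common divisor of $\mathbf p$ and all $\mathbf b_j$ with $j\le-1$, $B\in\mathcal B$ (these do not depend on $j$ and $\mathbf s_+\mathbf s_-$ divides $\mathbf p$). *)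

(* Defs.v *)
From HB Require Import structures.
From mathcomp Require Import all_boot all_order all_algebra.
Set Implicit Arguments. Unset Strict Implicit. Unset Printing Implicit Defensive.
Import Order.TTheory GRing.Theory Num.Theory.
Local Open Scope ring_scope.

(* An (n*d) x (n*d) matrix seen as an n x n array of d x d blocks:
   blk A i j is the (i,j) block (rows i*d..i*d+d-1, columns j*d..). *)
Definition blk (F : fieldType) (n d : nat) (A : 'M[F]_(n * d)) (i j : 'I_n)
  : 'M[F]_d := \matrix_(k, l) A (mxvec_index i k) (mxvec_index j l).

Definition inPM (F : fieldType) (d : nat) (M : 'M[F]_d.+1) (X : 'M[F]_d.+1)
  : Prop := exists q : {poly F}, X = horner_mx M q.

Definition inToeplitzPM (F : fieldType) (n d : nat) (M : 'M[F]_d.+1)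
  (A : 'M[F]_(n * d.+1)) : Prop :=
  (forall i j : 'I_n, inPM M (blk A i j)) /\
  (forall i j i' j' : 'I_n, (i%:Z - j%:Z = i'%:Z - j'%:Z)%R ->
      blk A i j = blk A i' j').

Definition is_subalgebra (F : fieldType) (N : nat) (S : 'M[F]_N -> Prop) : Prop :=
  S 0 /\ (forall X Y, S X -> S Y -> S (X + Y)) /\
  (forall (c : F) X, S X -> S (c *: X)) /\
  (forall X Y, S X -> S Y -> S (X *m Y)).

Definition maximal_subalg_T (F : fieldType) (n d : nat) (M : 'M[F]_d.+1)
  (S : 'M[F]_(n * d.+1) -> Prop) : Prop :=
  is_subalgebra S /\ (forall X, S X -> inToeplitzPM M X) /\
  (forall S' : 'M[F]_(n * d.+1) -> Prop, is_subalgebra S' ->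
     (forall X, S X -> S' X) -> (forall X, S' X -> inToeplitzPM M X) ->
     forall X, S' X -> S X).

(* Generic: not contained in {B_i = 0 for i >= 1} nor in {B_i = 0 for i <= -1}
   (B_m = block (i,j) with i - j = m). *)
Definition generic_subalg (F : fieldType) (n d : nat)
  (S : 'M[F]_(n * d.+1) -> Prop) : Prop :=
  ~ (forall X, S X -> forall i j : 'I_n, (j < i)%N -> blk X i j = 0) /\
  ~ (forall X, S X -> forall i j : 'I_n, (i < j)%N -> blk X i j = 0).

(* s is a gcd of p and all polynomials b with b(M) = B_m, m >= 1 (plus = true)
   resp. m <= -1 (plus = false), B in S. *)
Definition off_poly (F : fieldType) (n d : nat) (M : 'M[F]_d.+1)
  (S : 'M[F]_(n * d.+1) -> Prop) (plus : bool) (b : {poly F}) : Prop :=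
  exists X, S X /\ exists i j : 'I_n,
    (if plus then (j < i)%N else (i < j)%N) /\ blk X i j = horner_mx M b.

Definition is_gcd_assoc (F : fieldType) (n d : nat) (M : 'M[F]_d.+1)
  (S : 'M[F]_(n * d.+1) -> Prop) (plus : bool) (s : {poly F}) : Prop :=
  let p := mxminpoly M in
  s %| p /\ (forall b, off_poly M S plus b -> s %| b) /\
  (forall q : {poly F}, q %| p -> (forall b, off_poly M S plus b -> q %| b) ->
     q %| s).

(* Main.v *)
Require Import Defs.
From HB Require Import structures.
From mathcomp Require Import all_boot all_order all_algebra zify ring.
Set Implicit Arguments. Unset Strict Implicit. Unset Printing Implicit Defensive.
Import Order.TTheory GRing.Theory Num.Theory.
Local Open Scope ring_scope.


Section Blocks.
Variable F : fieldType.

Lemma blkD n d (X Y : 'M[F]_(n * d)) i j : blk (X + Y) i j = blk X i j + blk Y i j.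
Proof. by apply/matrixP => a b; rewrite !mxE. Qed.

Lemma blkZ n d c (X : 'M[F]_(n * d)) i j : blk (c *: X) i j = c *: blk X i j.
Proof. by apply/matrixP => a b; rewrite !mxE. Qed.

Lemma blk0 n d i j : blk (0 : 'M[F]_(n * d)) i j = 0.
Proof. by apply/matrixP => a b; rewrite !mxE. Qed.

Lemma blk_mul n d (X Y : 'M[F]_(n * d)) i j :
  blk (X *m Y) i j = \sum_(k < n) blk X i k *m blk Y k j.
Proof.
apply/matrixP => a b; rewrite !mxE summxE.
rewrite (reindex (uncurry (@mxvec_index n d))) /=; last first.
  by apply: onW_bij; have [g g1 g2] := curry_mxvec_bij n d; exists g => x; [apply: g1|apply: g2].
pose G k c := X (mxvec_index i a) (mxvec_index k c) * Y (mxvec_index k c) (mxvec_index j b).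
transitivity (\sum_(p : 'I_n * 'I_d) G p.1 p.2); first by apply: eq_bigr => -[k c].
rewrite -pair_bigA /=.
by apply: eq_bigr => k _; rewrite !mxE; apply: eq_bigr => c _; rewrite !mxE.
Qed.

Definition unidx n d (r : 'I_(n * d)) : 'I_n * 'I_d :=
  enum_val (cast_ord (esym (mxvec_cast n d)) r).

Lemma unidxK n d (i : 'I_n) (k : 'I_d) : unidx (mxvec_index i k) = (i, k).
Proof. by rewrite /unidx /mxvec_index cast_ordK enum_rankK. Qed.

Definition mkblk n d (G : 'I_n -> 'I_n -> 'M[F]_d) : 'M[F]_(n * d) :=
  \matrix_(r, c) G (unidx r).1 (unidx c).1 (unidx r).2 (unidx c).2.

Lemma blk_mkblk n d G i j : blk (@mkblk n d G) i j = G i j.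
Proof. by apply/matrixP => a b; rewrite !mxE !unidxK. Qed.

Definition shiftT n d (X : 'M[F]_(n * d)) :=
  forall i j i' j' : 'I_n, i' = i.+1 :> nat -> j' = j.+1 :> nat ->
    blk X i' j' = blk X i j.

Lemma shiftT_toep n d (X : 'M[F]_(n * d)) : shiftT X ->
  forall i j i' j' : 'I_n, (i%:Z - j%:Z = i'%:Z - j'%:Z)%R -> blk X i j = blk X i' j'.
Proof.
move=> HX.
have key : forall t (i j i' j' : 'I_n), i' = (i + t)%N :> nat -> j' = (j + t)%N :> nat ->
   blk X i' j' = blk X i j.
  elim=> [|t IH] i j i' j' ei ej.
    rewrite addn0 in ei; rewrite addn0 in ej.
    have E1 : i' = i by apply: val_inj.
    have E2 : j' = j by apply: val_inj.
    by rewrite E1 E2.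
  have hi : (i + t < n)%N by have := ltn_ord i'; lia.
  have hj : (j + t < n)%N by have := ltn_ord j'; lia.
  rewrite (HX (Ordinal hi) (Ordinal hj)) /=; last 2 first.
  - by rewrite ei addnS.
  - by rewrite ej addnS.
  by apply: IH.
move=> i j i' j' e.
have e' : (i + j' = i' + j)%N by lia.
case: (leqP i i') => hii.
  by symmetry; apply: (key (i' - i)%N); lia.
by apply: (key (i - i')%N); lia.
Qed.

Lemma blk_mul_shift n d (X Y : 'M[F]_(n * d.+1)) (i j i' j' k0 kl : 'I_n) :
  shiftT X -> shiftT Y -> i' = i.+1 :> nat -> j' = j.+1 :> nat ->
  k0 = 0%N :> nat -> kl = n.-1 :> nat ->
  blk (X *m Y) i' j' =
    blk (X *m Y) i j + blk X i' k0 *m blk Y k0 j' - blk X i kl *m blk Y kl j.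
Proof.
case: n X Y i j i' j' k0 kl => [|n] X Y i j i' j' k0 kl; first by case: i.
move=> HX HY ei ej e0 el.
rewrite !blk_mul big_ord_recl (big_ord_recr n (fun k => blk X i k *m blk Y k j)) /=.
have -> : k0 = ord0 by apply: val_inj.
have -> : kl = ord_max by apply: val_inj.
rewrite -[RHS]addrA [_ - _]addrC addrA addrK addrC; congr (_ + _).
apply: eq_bigr => k _.
rewrite (HX i (widen_ord (leqnSn n) k)) //.
by rewrite (HY (widen_ord (leqnSn n) k) j).
Qed.

End Blocks.


Section Mult.
Variables (F : fieldType) (d : nat) (M : 'M[F]_d.+1).

Definition mult (c : {poly F}) (X : 'M[F]_d.+1) := exists q, X = horner_mx M (c * q).

Lemma mult0 c : mult c 0.
Proof. by exists 0; rewrite mulr0 rmorph0. Qed.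

Lemma multD c X Y : mult c X -> mult c Y -> mult c (X + Y).
Proof. by move=> [q ->] [r ->]; exists (q + r); rewrite mulrDr rmorphD. Qed.

Lemma mult_sum c I (r : seq I) (P : pred I) (G : I -> 'M[F]_d.+1) :
  (forall i, P i -> mult c (G i)) -> mult c (\sum_(i <- r | P i) G i).
Proof. move=> H; apply: big_ind => //; [exact: mult0 | exact: multD]. Qed.

Lemma mult_inPM c X : mult c X -> inPM M X.
Proof. by move=> [q ->]; exists (c * q). Qed.

Lemma mult_mull c X Y : inPM M X -> mult c Y -> mult c (X *m Y).
Proof.
move=> [a ->] [q ->]; exists (a * q).
by rewrite mulmxE -rmorphM mulrCA.
Qed.

Lemma mult_mulr c X Y : mult c X -> inPM M Y -> mult c (X *m Y).
Proof.
move=> [q ->] [a ->]; exists (q * a).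
by rewrite mulmxE -rmorphM mulrA.
Qed.

Lemma multZ c a X : mult c X -> mult c (a *: X).
Proof.
move=> h; rewrite -mul_scalar_mx; apply: mult_mull h.
by exists a%:P; rewrite horner_mx_C.
Qed.

Lemma mult_zero a b X Y : mult a X -> mult b Y -> mxminpoly M %| a * b ->
  X *m Y = 0.
Proof.
move=> [q ->] [r ->] /dvdpP [k hk].
rewrite mulmxE -rmorphM mulrACA hk (mulrC k) -mulrA rmorphM.
change (horner_mx M (mxminpoly M) * horner_mx M (k * (q * r)) = 0).
rewrite mx_root_minpoly.
by rewrite mul0r.
Qed.

Lemma mult_dvd a b X : a %| b -> mult b X -> mult a X.
Proof.
move=> /dvdpP [k ->] [q ->]; exists (k * q); by rewrite mulrCA mulrA.
Qed.

Lemma hornerMmx a b : horner_mx M (a * b) = horner_mx M a *m horner_mx M b.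
Proof. by rewrite mulmxE rmorphM. Qed.

End Mult.


Section J.
Variables (F : fieldType) (n d : nat) (M : 'M[F]_d.+1) (sm u : {poly F}).
Hypothesis Hu : mxminpoly M %| sm * u.

Definition SP (Y : 'M[F]_(n * d.+1)) :=
  shiftT Y /\ (forall i j, inPM M (blk Y i j)) /\
  (forall i j : 'I_n, (i < j)%N -> mult M sm (blk Y i j)).

Definition Jset (Z : 'M[F]_(n * d.+1)) :=
  (forall i j : 'I_n, (i <= j)%N -> blk Z i j = 0) /\ shiftT Z /\
  (forall i j, mult M u (blk Z i j)).

Lemma Hu' : mxminpoly M %| u * sm.
Proof. by rewrite mulrC. Qed.

Lemma shiftT_mul (X Y : 'M[F]_(n * d.+1)) : shiftT X -> shiftT Y ->
  (forall (i j i' j' k0 kl : 'I_n), i' = i.+1 :> nat -> j' = j.+1 :> nat ->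
    k0 = 0%N :> nat -> kl = n.-1 :> nat ->
    blk X i' k0 *m blk Y k0 j' = 0 /\ blk X i kl *m blk Y kl j = 0) ->
  shiftT (X *m Y).
Proof.
move=> HX HY Hb i j i' j' ei ej.
have hn : (0 < n)%N by have := ltn_ord i; lia.
pose k0 : 'I_n := Ordinal hn.
have hl : (n.-1 < n)%N by rewrite prednK.
pose kl : 'I_n := Ordinal hl.
rewrite (@blk_mul_shift _ _ _ X Y i j i' j' k0 kl) //.
by have [-> ->] := Hb i j i' j' k0 kl ei ej erefl erefl; rewrite addr0 subr0.
Qed.

Lemma J_mull Y Z : SP Y -> Jset Z -> Jset (Y *m Z).
Proof.
move=> [HY1 [HY2 HY3]] [HZ1 [HZ2 HZ3]]; split; [|split].
- move=> i j hij; rewrite blk_mul; apply: big1 => k _.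
  case: (leqP k j) => hk; first by rewrite HZ1 // mulmx0.
  by apply: mult_zero (HY3 i k _) (HZ3 k j) Hu; apply: leq_ltn_trans hk.
- apply: shiftT_mul => // i j i' j' k0 kl ei ej e0 el; split.
    by rewrite HZ1 ?mulmx0 // e0.
  apply: mult_zero (HY3 i kl _) (HZ3 kl j) Hu.
  by rewrite el; have := ltn_ord i'; lia.
- move=> i j; rewrite blk_mul; apply: mult_sum => k _.
  exact: mult_mull.
Qed.

Lemma J_mulr Y Z : SP Y -> Jset Z -> Jset (Z *m Y).
Proof.
move=> [HY1 [HY2 HY3]] [HZ1 [HZ2 HZ3]]; split; [|split].
- move=> i j hij; rewrite blk_mul; apply: big1 => k _.
  case: (leqP i k) => hk; first by rewrite HZ1 // mul0mx.
  by apply: mult_zero (HZ3 i k) (HY3 k j _) Hu'; apply: leq_trans hij.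
- apply: shiftT_mul => // i j i' j' k0 kl ei ej e0 el; split.
    apply: mult_zero (HZ3 i' k0) (HY3 k0 j' _) Hu'.
    by rewrite e0 ej.
  by rewrite HZ1 ?mul0mx // el; have := ltn_ord i'; lia.
- move=> i j; rewrite blk_mul; apply: mult_sum => k _.
  exact: mult_mulr.
Qed.

Lemma J_mul Z Z' : Jset Z -> Jset Z' -> Jset (Z *m Z').
Proof.
move=> [HZ1 [HZ2 HZ3]] [HW1 [HW2 HW3]]; split; [|split].
- move=> i j hij; rewrite blk_mul; apply: big1 => k _.
  case: (leqP i k) => hk; first by rewrite HZ1 // mul0mx.
  by rewrite HW1 ?mulmx0 //; apply: leq_trans hij; apply: ltnW.
- apply: shiftT_mul => // i j i' j' k0 kl ei ej e0 el; split.
    by rewrite HW1 ?mulmx0 // e0.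
  by rewrite HZ1 ?mul0mx // el; have := ltn_ord i'; lia.
- move=> i j; rewrite blk_mul; apply: mult_sum => k _.
  apply: mult_mulr => //; exact: mult_inPM (HW3 k j).
Qed.

Lemma J0 : Jset 0.
Proof.
split; [|split].
- by move=> i j _; rewrite blk0.
- by move=> i j i' j' _ _; rewrite !blk0.
- by move=> i j; rewrite blk0; apply: mult0.
Qed.

Lemma JD Z Z' : Jset Z -> Jset Z' -> Jset (Z + Z').
Proof.
move=> [HZ1 [HZ2 HZ3]] [HW1 [HW2 HW3]]; split; [|split].
- by move=> i j h; rewrite blkD HZ1 // HW1 // addr0.
- by move=> i j i' j' ei ej; rewrite !blkD (HZ2 i j) // (HW2 i j).
- by move=> i j; rewrite blkD; apply: multD.
Qed.

Lemma JZ c Z : Jset Z -> Jset (c *: Z).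
Proof.
move=> [HZ1 [HZ2 HZ3]]; split; [|split].
- by move=> i j h; rewrite blkZ HZ1 // scaler0.
- by move=> i j i' j' ei ej; rewrite !blkZ (HZ2 i j).
- by move=> i j; rewrite blkZ; apply: multZ.
Qed.

End J.


Unset Implicit Arguments.
Set Strict Implicit.

Theorem lemma7p3 (F : numClosedFieldType) (n d : nat) (M : 'M[F]_d.+1)
  (S : 'M[F]_(n * d.+1) -> Prop) (sp sm : {poly F}) (A : 'M[F]_(n * d.+1))
  (ap am gamma : nat -> {poly F}) :
  (2 <= n)%N ->
  mxminpoly M = char_poly M ->
  maximal_subalg_T M S -> generic_subalg S ->
  is_gcd_assoc M S true sp -> is_gcd_assoc M S false sm ->
  S A ->
  (forall k : nat, (1 <= k < n)%N ->
     coprimep (ap k) (mxminpoly M) /\ coprimep (am k) (mxminpoly M) /\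
     (forall i j : 'I_n, i = (j + k)%N :> nat ->
        blk A i j = horner_mx M (sp * ap k)) /\
     (forall i j : 'I_n, j = (i + k)%N :> nat ->
        blk A i j = horner_mx M (sm * am k))) ->
  (forall i : nat, (1 <= i < n)%N ->
     mxminpoly M %| gamma i * am (n - i)%N - 1) ->
  forall i j : nat, (1 <= i < n)%N -> (1 <= j < n)%N ->
    mxminpoly M %/ (sp * sm) %| ap i * gamma i - ap j * gamma j.
Proof.
move=> n2 _ [[HS0 [HSD [HSZ HSM]]] [HT Hmaxl]] _ [spp [sp_off _]] [smp [sm_off _]]
  HA HAk Hgam i j hi hj.
set p := mxminpoly M in spp smp sp_off sm_off Hgam *.
have SPof : forall Y, S Y -> SP (n:=n) M sm Y.
  move=> Y hY; have [Hin Htoep] := HT Y hY; split; [|split] => //.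
    by move=> i0 j0 i' j' ei ej; apply: Htoep; lia.
  move=> i0 j0 hij; have [b hb] := Hin i0 j0.
  have hsb : sm %| b by apply: sm_off; exists Y; split => //; exists i0, j0.
  by exists (b %/ sm); rewrite mulrC divpK.
set u := p %/ sm.
have Hu : p %| sm * u by rewrite mulrC divpK.
pose S' X := exists Y Z, S Y /\ Jset (n:=n) M u Z /\ X = Y + Z.
have HS'sub : is_subalgebra S'.
  split; [|split; [|split]].
  - by exists 0, 0; split => //; split; [exact: (J0 n M u) | rewrite addr0].
  - move=> X X' [Y [Z [hY [hZ ->]]]] [Y' [Z' [hY' [hZ' ->]]]].
    exists (Y + Y'), (Z + Z'); split; first exact: HSD.
    by split; [exact: JD | rewrite addrACA].
  - move=> c X [Y [Z [hY [hZ ->]]]]; exists (c *: Y), (c *: Z).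
    by split; [exact: HSZ | split; [exact: JZ | rewrite scalerDr]].
  - move=> X X' [Y [Z [hY [hZ ->]]]] [Y' [Z' [hY' [hZ' ->]]]].
    exists (Y *m Y'), (Y *m Z' + Z *m Y' + Z *m Z'); split; first exact: HSM.
    split; last by rewrite mulmxDl !mulmxDr !addrA.
    apply: JD; [apply: JD|].
    + exact: (@J_mull _ _ _ _ _ _ Hu _ _ (SPof _ hY) hZ').
    + exact: (@J_mulr _ _ _ _ _ _ Hu _ _ (SPof _ hY') hZ).
    + exact: (J_mul Hu hZ hZ').
have HSS' : forall X, S X -> S' X.
  by move=> X hX; exists X, 0; split => //; split; [exact: (J0 n M u) | rewrite addr0].
have HS'T : forall X, S' X -> inToeplitzPM M X.
  move=> X [Y [Z [hY [[_ [hZ2 hZ3]] ->]]]].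
  have [hY1 [hY2 _]] := SPof _ hY.
  split.
    move=> i0 j0; rewrite blkD; have [a ->] := hY2 i0 j0.
    have [b ->] := mult_inPM (hZ3 i0 j0).
    by exists (a + b); rewrite rmorphD.
  move=> i0 j0 i' j' e; rewrite !blkD.
  by rewrite (shiftT_toep hY1 e) (shiftT_toep hZ2 e).
have HS'S := Hmaxl S' HS'sub HSS' HS'T.
pose T0 := mkblk (fun i0 j0 : 'I_n => if (i0 == j0.+1 :> nat) then horner_mx M u else 0).
have JT0 : Jset (n:=n) M u T0.
  split; [|split].
  - move=> i0 j0 h; rewrite blk_mkblk.
    by case: eqP => // e; move: h; rewrite e ltnn.
  - by move=> i0 j0 i' j' ei ej; rewrite !blk_mkblk ei ej.
  - move=> i0 j0; rewrite blk_mkblk; case: ifP => _; last exact: mult0.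
    by exists 1; rewrite mulr1.
have ST0 : S T0 by apply: HS'S; exists 0, T0; split => //; split => //; rewrite add0r.
have h1 : (1 < n)%N by [].
have h0 : (0 < n)%N by lia.
have spu : sp %| u.
  apply: sp_off; exists T0; split => //; exists (Ordinal h1), (Ordinal h0).
  by split => //; rewrite blk_mkblk.
have spsm : sp * sm %| p by rewrite -(divpK smp) -/u; apply: dvdp_mul.
have Hsq : forall a b, (1 <= a < n)%N -> (1 <= b < n)%N ->
    p %| (sp * ap a) * (sm * am b) - (sm * am (n - a)%N) * (sp * ap (n - b)%N).
  move=> a b ha hb.
  have hAA := HSM _ _ HA HA.
  have [sAA _] := SPof _ hAA.
  have [sA _] := SPof _ HA.
  have hi0 : (a.-1 < n)%N by lia.
  have hi' : (a < n)%N by lia.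
  have hj0 : (b.-1 < n)%N by lia.
  have hj' : (b < n)%N by lia.
  have hl : (n.-1 < n)%N by lia.
  pose i0 : 'I_n := Ordinal hi0. pose i' : 'I_n := Ordinal hi'.
  pose j0 : 'I_n := Ordinal hj0. pose j' : 'I_n := Ordinal hj'.
  pose k0 : 'I_n := Ordinal h0. pose kl : 'I_n := Ordinal hl.
  have e1 := @blk_mul_shift _ _ _ A A i0 j0 i' j' k0 kl sA sA.
  rewrite /= in e1.
  have e2 := e1 ltac:(lia) ltac:(lia) erefl erefl.
  have e3 : blk A i' k0 *m blk A k0 j' - blk A i0 kl *m blk A kl j0 = 0.
    apply: (addrI (blk (A *m A) i0 j0)); rewrite addr0 addrA -e2.
    by apply: sAA => /=; lia.
  have [_ [_ [HAa _]]] := HAk a ha.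
  have [_ [_ [_ HAb]]] := HAk b hb.
  have [_ [_ [_ HAna]]] := HAk (n - a)%N ltac:(lia).
  have [_ [_ [HAnb _]]] := HAk (n - b)%N ltac:(lia).
  have E1 : blk A i' k0 = horner_mx M (sp * ap a) by apply: HAa => /=; lia.
  have E2 : blk A k0 j' = horner_mx M (sm * am b) by apply: HAb => /=; lia.
  have E3 : blk A i0 kl = horner_mx M (sm * am (n - a)%N) by apply: HAna => /=; lia.
  have E4 : blk A kl j0 = horner_mx M (sp * ap (n - b)%N) by apply: HAnb => /=; lia.
  rewrite E1 E2 E3 E4 -!hornerMmx -rmorphB in e3.
  exact: mxminpoly_min.
have pn0 : p != 0 := monic_neq0 (mxminpoly_monic M).
set D := p %/ (sp * sm).
have pD : p = (sp * sm) * D by rewrite mulrC divpK.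
have ss0 : sp * sm != 0.
  by apply/eqP => h; move: pn0; rewrite pD h mul0r eqxx.
have hE : D %| ap i * am (n - j)%N - am (n - i)%N * ap j.
  have := Hsq i (n - j)%N hi ltac:(lia).
  rewrite subKn; last by lia.
  rewrite {1}pD.
  rewrite (_ : sp * ap i * (sm * am (n - j)%N) - sm * am (n - i)%N * (sp * ap j)
     = (sp * sm) * (ap i * am (n - j)%N - am (n - i)%N * ap j)); last by ring.
  by rewrite dvdp_mul2l.
have hDp : D %| p by rewrite pD dvdp_mull.
rewrite (_ : ap i * gamma i - ap j * gamma j =
   gamma i * gamma j * (ap i * am (n - j)%N - am (n - i)%N * ap j)
   - ap i * gamma i * (gamma j * am (n - j)%N - 1)
   + ap j * gamma j * (gamma i * am (n - i)%N - 1)); last by ring.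
apply: dvdp_add; first apply: dvdp_sub.
- exact: dvdp_mull.
- by apply: dvdp_mull; apply: dvdp_trans hDp (Hgam j hj).
- by apply: dvdp_mull; apply: dvdp_trans hDp (Hgam i hi).
Qed.
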